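(* In Algorithm 1 (described in the context), every time a triplet $(\mathrm{dist},\mathrm{seed},v_0)$ is popped from $Q$ the following hold: (1) if $\mathrm{seed}\in\mathrm{NLV}(v_0,k)$ then $\mathrm{dist}=d_G(\mathrm{seed},v_0)$; (2) every pair $(s,v)\in\mathcal L\times V$ with $d_G(s,v)<\mathrm{dist}$ and $s\in\mathrm{NLV}(v,k)$ belongs to the visited set.
   Context: $d_G$ is the shortest-path distance in $G$; $\mathrm{NLV}(v,k)$ is the set of $k$ nearest labeled vertices to $v$ with respect to $d_G$. Algorithm 1: input an undirected graph $G=(V,E,w)$ with non-negative weights, a set $\mathcal L\subseteq V$ of labeled vertices, and an integer $k\ge1$. It maintains a min-priority queue $Q$ of pairs $(\mathrm{seed},v)\in\mathcal L\times V$ with priorities (a popped pair with priority $\mathrm{dist}$ is the triplet $(\mathrm{dist},\mathrm{seed},v)$), and for each $v\in V$ a list kNN$[v]$ (initially empty) and a set $S_v$ (initially empty); the visited set is $\{(s,v): s\in S_v\}$. Initially, for each $s\in\mathcal L$, $(s,s)$ is inserted with priority $0$. While $Q$ is nonempty: pop the pair $(\mathrm{seed},v_0)$ of minimum priority $\mathrm{dist}$; add $\mathrm{seed}$ to $S_{v_0}$; if kNN$[v_0]$ has fewer than $k$ entries, append $(\mathrm{dist},\mathrm{seed})$ to kNN$[v_0]$ and, for every neighbour $v$ of $v_0$ such that kNN$[v]$ has fewer than $k$ entries and $\mathrm{seed}\notin S_v$, perform decrease-or-insert of $(\mathrm{seed},v)$ with priority $\mathrm{dist}+w(v_0,v)$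 (if the pair is in $Q$ its priority is lowered to this value when smaller; otherwise it is inserted). *)

(* Defs.v *)
From HB Require Import structures.
From mathcomp Require Import all_boot all_order all_algebra.
From mathcomp Require Import classical_sets reals constructive_ereal ereal.
Set Implicit Arguments. Unset Strict Implicit. Unset Printing Implicit Defensive.
Import Order.TTheory GRing.Theory Num.Theory.
Local Open Scope ring_scope.
Local Open Scope classical_set_scope.

Section KNN.
Variables (R : realType) (V : finType).
(* undirected graph: symmetric irreflexive adjacency [e], weight [w u v] of edge {u,v} *)
Variables (e : rel V) (w : V -> V -> R).

Fixpoint pweight (x : V) (p : seq V) : R :=
  if p is y :: p' then w x y + pweight y p' else 0.

Definition walk (s : V) (p : seq V) (v : V) : bool := path e s p && (last s p == v).

(* shortest-path distance d_G(s,v) (infimum over walks; +oo if no walk) *)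
Definition dG (s v : V) : \bar R :=
  ereal_inf [set (pweight s p)%:E | p in [set p | walk s p v]].

(* tie-breaking convention between labeled vertices at equal distance *)
Definition rk (s : V) : nat := enum_rank s.

Definition closer (v s' s : V) : bool :=
  ((dG s' v < dG s v)%E) || ((dG s' v == dG s v) && (rk s' < rk s)%N).

Definition NLV (L : {set V}) (k : nat) (v : V) : {set V} :=
  [set s in L | #|[set s' in L | closer v s' s]| < k]%N.

Record state := State {
  Q : V -> V -> option R;          (* Q seed v = Some priority iff (seed,v) is in the queue *)
  kNN : V -> seq (R * V);          (* kNN[v], list of (dist, seed) *)
  S : V -> {set V}                 (* S_v ; visited set = {(s,v) | s \in S_v} *)
}.

Definition init (L : {set V}) : state :=
  State (fun s v => if (s \in L) && (v == s) then Some 0 else None)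
        (fun _ => [::]) (fun _ => finset.set0).

Definition is_pop (st : state) (dist : R) (seed v0 : V) : Prop :=
  Q st seed v0 = Some dist /\
  forall s v d', Q st s v = Some d' ->
    dist < d' \/ (dist = d' /\ (rk seed <= rk s)%N).

Definition decr_or_ins (o : option R) (p : R) : option R :=
  if o is Some q then Some (Num.min q p) else Some p.

Definition after (k : nat) (st : state) (dist : R) (seed v0 : V) : state :=
  let Q1 := fun s v => if (s == seed) && (v == v0) then None else Q st s v in
  let S1 := fun v => if v == v0 then seed |: S st v else S st v in
  if (size (kNN st v0) < k)%N then
    let kNN1 := fun v => if v == v0 then rcons (kNN st v) (dist, seed) else kNN st v in
    let Q2 := fun s v =>
      if [&& s == seed, e v0 v, (size (kNN1 v) < k)%N & seed \notin S1 v]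
      then decr_or_ins (Q1 s v) (dist + w v0 v) else Q1 s v in
    State Q2 kNN1 S1
  else State Q1 (kNN st) S1.

Inductive reach (L : {set V}) (k : nat) : state -> Prop :=
| reach_init : reach L k (init L)
| reach_step st dist seed v0 :
    reach L k st -> is_pop st dist seed v0 -> reach L k (after k st dist seed v0).

End KNN.

(* Main.v *)
Require Import Defs.
From HB Require Import structures.
From mathcomp Require Import all_boot all_order all_algebra.
From mathcomp Require Import classical_sets reals constructive_ereal ereal.
From mathcomp Require Import lra.
Import Order.TTheory GRing.Theory Num.Theory.
Local Open Scope ring_scope.
Set Implicit Arguments. Unset Strict Implicit. Unset Printing Implicit Defensive.

Section Graph.
Variables (R : realType) (V : finType) (e : rel V) (w : V -> V -> R).
Hypothesis eirr : irreflexive e.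
Hypothesis w0 : forall u v, e u v -> 0 <= w u v.

Lemma pweight_rcons x p y : pweight w x (rcons p y) = pweight w x p + w (last x p) y.
Proof. elim: p x => [|z p IH] x /=; first by rewrite addr0 add0r.
by rewrite IH addrA. Qed.

Lemma pweight_cat x p q : pweight w x (p ++ q) = pweight w x p + pweight w (last x p) q.
Proof. elim: p x => [|y p IH] x /=; first by rewrite add0r.
by rewrite IH addrA. Qed.

Lemma pweight_ge0 x p : path e x p -> 0 <= pweight w x p.
Proof.
elim: p x => [|y p IH] x //= /andP[exy hp].
by rewrite addr_ge0 // ?w0 // IH.
Qed.

Lemma shorten_walk x p : path e x p -> exists q,
  [/\ path e x q, last x q = last x p, uniq (x :: q) & pweight w x q <= pweight w x p].
Proof.
elim: p x => [|y p IH] x /=.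
  by move=> _; exists [::].
move=> /andP[exy hp]; have [q [hq lq uq wq]] := IH y hp.
case: (boolP (x \in y :: q)) => hx.
  move: hx; rewrite in_cons => /orP[/eqP xy|xq].
    by subst y; rewrite eirr in exy.
  move: hq lq uq wq; case/splitPr: xq => q1 q2 hq lq uq wq.
  exists q2; split.
  - by move: hq; rewrite cat_path /= => /and3P[].
  - by rewrite -lq last_cat.
  - by move: uq; rewrite -cat_cons cat_uniq => /and3P[].
  - move: hq; rewrite cat_path /= => /and3P[h1 h2 h3].
    move: wq; rewrite pweight_cat /=.
    have := pweight_ge0 h1; have := w0 h2; have := w0 exy. lra.
exists (y :: q); split => //=.
- by rewrite exy hq.
- by rewrite hx.
- by rewrite lerD2l.
Qed.

Fixpoint cand n : seq (seq V) :=
  if n is n'.+1 then [::] :: [seq x :: q | x <- enum V, q <- cand n'] else [:: [::]].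

Lemma mem_cand n q : (size q <= n)%N -> q \in cand n.
Proof.
elim: n q => [|n IH] [|x q] //= hs.
rewrite in_cons /=; apply/allpairsP; exists (x, q); split => //=.
- by rewrite mem_enum.
- exact: IH.
Qed.

Lemma list_min (l : seq (seq V)) (P : pred (seq V)) (f : seq V -> R) :
  has P l -> exists2 q, (q \in l) && P q & forall q', q' \in l -> P q' -> f q <= f q'.
Proof.
elim: l => [|a l IH] //= h.
case: (boolP (has P l)) => hl.
  have [q /andP[ql Pq] qmin] := IH hl.
  case: (boolP (P a && (f a <= f q))) => ha.
    case/andP: ha => Pa fa; exists a; first by rewrite mem_head Pa.
    move=> q'; rewrite in_cons => /orP[/eqP->//|q'l Pq'].
    exact: le_trans fa (qmin _ q'l Pq').
  exists q; first by rewrite in_cons ql orbT Pq.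
  move=> q'; rewrite in_cons => /orP[/eqP-> Pa|q'l Pq']; last exact: qmin.
  by move: ha; rewrite Pa /= -ltNge => /ltW.
have Pa : P a by move: h; rewrite (negbTE hl) orbF.
exists a; first by rewrite mem_head Pa.
move=> q'; rewrite in_cons => /orP[/eqP->//|q'l Pq'].
by move: hl => /hasPn /(_ _ q'l); rewrite Pq'.
Qed.

Local Notation d := (dG e w).

Lemma dG_le s p v : walk e s p v -> (d s v <= (pweight w s p)%:E)%E.
Proof. by move=> h; apply: ereal_inf_lbound; exists p. Qed.

Lemma dG_ge0 s v : (0 <= d s v)%E.
Proof.
apply: le_ereal_inf_tmp => _ [p hp <-]; rewrite lee_fin.
by apply: pweight_ge0; case/andP: hp.
Qed.

Lemma dG_min s v : (d s v < +oo)%E ->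
  exists2 p, walk e s p v & (pweight w s p)%:E = d s v.
Proof.
move=> /ereal_inf_lt [_ [p0 hp0 <-] _].
have short : forall q, walk e s q v -> exists q',
    [/\ walk e s q' v, q' \in cand #|V| & pweight w s q' <= pweight w s q].
  move=> q /andP[hq lq]; have [q' [hq' lq' uq' wq']] := shorten_walk hq.
  exists q'; split => //.
  - by rewrite /walk hq' lq'.
  apply: mem_cand; have := max_card (mem (s :: q')).
  by rewrite (card_uniqP uq') /= => /ltnW.
have [q0 [hq0 cq0 _]] := short p0 hp0.
have [p /andP[pin pw] pmin] := list_min (P := fun q => walk e s q v)
   (pweight w s) (introT hasP (ex_intro2 _ _ q0 cq0 hq0)).
exists p => //; apply/eqP; rewrite eq_le dG_le // andbT.
apply: le_ereal_inf_tmp => _ [q hq <-]; rewrite lee_fin.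
have [q' [hq' cq' wq']] := short q hq.
exact: le_trans (pmin _ cq' hq') wq'.
Qed.

Lemma dG_tri s u v : e u v -> (d s v <= d s u + (w u v)%:E)%E.
Proof.
move=> euv; case: (boolP (d s u < +oo)%E) => [/dG_min [p /andP[hp /eqP lp] <-]|].
  rewrite -EFinD; apply: le_trans (dG_le (p := rcons p v) _) _.
    by rewrite /walk rcons_path hp lp euv last_rcons eqxx.
  by rewrite pweight_rcons lp.
rewrite ltey negbK => /eqP ->.
by rewrite addye ?leey.
Qed.


Variables (L : {set V}) (k : nat).
Local Notation NL := (NLV e w L k).

Definition lexle (d1 : R) (r1 : nat) (d2 : R) (r2 : nat) : bool :=
  (d1 < d2) || ((d1 == d2) && (r1 <= r2)%N).

Lemma lexle_trans d1 r1 d2 r2 d3 r3 :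
  lexle d1 r1 d2 r2 -> lexle d2 r2 d3 r3 -> lexle d1 r1 d3 r3.
Proof.
rewrite /lexle => /orP[h1|/andP[/eqP-> h1]] /orP[h2|/andP[/eqP<- h2]].
- by rewrite (lt_trans h1 h2).
- by rewrite h1.
- by rewrite h2.
- by rewrite eqxx (leq_trans h1 h2) orbT.
Qed.

Lemma rk_inj : injective (@rk V).
Proof. by move=> x y /val_inj /enum_rank_inj. Qed.

Definition Inv (st : state R V) : Prop :=
  [/\ (forall s v x, Q st s v = Some x ->
         [/\ s \in L, s \notin S st v & (d s v <= x%:E)%E]),
      (forall s, s \in L -> s \in S st s \/ exists2 x, Q st s s = Some x & x <= 0),
      (forall s u' u, s \in S st u' -> s \in NL u' -> e u' u -> s \in NL u ->
         s \in S st u \/ exists2 x, Q st s u = Some x & (x%:E <= d s u' + (w u' u)%:E)%E),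
      (forall v, uniq (map snd (kNN st v))) &
      (forall v x' s', (x', s') \in kNN st v ->
         [/\ s' \in L, s' \in S st v, (d s' v <= x'%:E)%E &
             forall s y x, Q st s y = Some x -> lexle x' (rk s') x (rk s)])].

Lemma Inv_init : Inv (init R L).
Proof.
split => //=.
- move=> s v x; case: ifP => // /andP[hs /eqP->] [<-]; split; rewrite ?inE //.
  by apply: (dG_le (p := [::])); rewrite /walk /= eqxx.
- by move=> s hs; right; exists 0; rewrite ?hs ?eqxx.
- by move=> s u' u; rewrite inE.
Qed.

Lemma NLV_pred s u' v r : e u' v -> d s u' = r%:E -> d s v = (r + w u' v)%:E ->
  s \in NL v -> s \in NL u'.
Proof.
move=> euv hu hv; rewrite /NLV !finset.in_set => /andP[-> hc] /=.
apply: leq_ltn_trans hc.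
apply: subset_leq_card; apply/fintype.subsetP => s'.
rewrite !inE => /andP[-> /=]; rewrite /closer hu hv.
have tri := dG_tri s' euv; have ge := dG_ge0 s' u'.
case: (d s' u') tri ge => [r'| |] //= tri _.
  rewrite !lte_fin !eqe => /orP[hlt|/andP[/eqP hrr hrk]].
    apply/orP; left; apply: le_lt_trans tri _; rewrite -EFinD lte_fin; lra.
  by subst r'; move: tri; rewrite -EFinD le_eqVlt => /orP[->|->]; rewrite ?hrk ?orbT.
Qed.

Lemma frontier st : Inv st -> forall s v, s \in NL v -> s \notin S st v ->
  (d s v < +oo)%E -> exists y, exists2 x, Q st s y = Some x & (x%:E <= d s v)%E.
Proof.
case=> I1 I0 IP _ _ s v hN hS /(dG_min) [p hp hw].
suff : s \in S st v \/ exists y, exists2 x, Q st s y = Some x & (x%:E <= d s v)%E.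
  by case=> // h; rewrite h in hS.
elim/last_ind: p v hp hw hN {hS} => [|q u IH] v.
  rewrite /walk /= => /eqP <- hw hN.
  have hL : s \in L by move: hN; rewrite inE => /andP[].
  case: (I0 s hL) => [->|[x hx hx0]]; [by left | right].
  by exists s, x => //; rewrite -hw lee_fin.
rewrite /walk rcons_path last_rcons => /andP[/andP[hq eu] /eqP huv]; subst u.
set u' := last s q in eu *.
rewrite pweight_rcons -/u' => hw hN.
have h1 := dG_le (p := q) (v := u').
have h1' : (d s u' <= (pweight w s q)%:E)%E by apply: h1; rewrite /walk hq eqxx.
have h2 := dG_tri s eu.
have hdu : d s u' = (pweight w s q)%:E.
  apply/eqP; rewrite eq_le h1' /=.
  move: h2; rewrite -hw; have := dG_ge0 s u'.
  case: (d s u') h1' => [r| |] //= _ _; rewrite -EFinD !lee_fin; lra.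
have hNu : s \in NL u' := NLV_pred eu hdu (esym hw) hN.
have [hSu|[y [x hx hxle]]] := IH u' (introT andP (conj hq (eqxx _))) (esym hdu) hNu.
  case: (IP s u' v hSu hNu eu hN) => [->|[x hx hxle]]; [by left|right].
  by exists v, x => //; rewrite -hw EFinD -hdu.
right; exists y, x => //; apply: le_trans hxle _.
by rewrite hdu -hw lee_fin ler_wpDr // w0.
Qed.

Lemma notfull st : Inv st -> forall s u, s \in NL u -> s \notin S st u ->
  (size (kNN st u) < k)%N.
Proof.
move=> inv s u hN hS; have [_ _ _ IU IK] := inv.
rewrite ltnNge; apply/negP => hk.
have hc := hN; move: hc; rewrite /NLV finset.in_set => /andP[_]; apply/negP; rewrite -leqNgt.
apply: (leq_trans hk); rewrite -(size_map snd) cardE.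
apply: uniq_leq_size => // s' /mapP [[x' s''] hin /= ->{s'}].
have [hL hS' hd hlex] := IK _ _ _ hin.
rewrite mem_enum inE hL /= /closer.
have hne : rk s'' != rk s.
  by apply/negP => /eqP /rk_inj he; subst s''; rewrite hS' in hS.
case: (boolP (d s u < +oo)%E) => hfin; last first.
  move: hfin; rewrite ltey negbK => /eqP ->.
  by rewrite (le_lt_trans hd) ?ltey.
have [y [x hx hxle]] := frontier inv hN hS hfin.
move: (hlex _ _ _ hx); rewrite /lexle => /orP[hlt|/andP[/eqP hxx hrk]].
  apply/orP; left; apply: (le_lt_trans hd); apply: lt_le_trans hxle.
  by rewrite lte_fin.
subst x'; have : (d s'' u <= d s u)%E := le_trans hd hxle.
rewrite le_eqVlt => /orP[->|->]; last by [].
by rewrite /= ltn_neqAle hne hrk orbT.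
Qed.

Lemma concl st dist seed v0 : Inv st -> is_pop st dist seed v0 ->
  (seed \in NL v0 -> dist%:E = d seed v0) /\
  (forall s v, s \in L -> (d s v < dist%:E)%E -> s \in NL v -> s \in S st v).
Proof.
move=> inv [hQ hmin]; have [I1 _ _ _ _] := inv.
have nolt : forall s y x, Q st s y = Some x -> (x%:E < dist%:E)%E -> False.
  move=> s y x hx; rewrite lte_fin; case: (hmin _ _ _ hx) => [h|[-> _]].
    by move=> h'; have := lt_trans h h'; rewrite ltxx.
  by rewrite ltxx.
split.
  move=> hN; have [_ hS hle] := I1 _ _ _ hQ.
  apply/eqP; rewrite eq_le hle andbT leNgt; apply/negP => hlt.
  have [y [x hx hxle]] := frontier inv hN hS (lt_trans hlt (ltey _)).
  exact: nolt hx (le_lt_trans hxle hlt).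
move=> s v hL hlt hN; apply/negPn/negP => hS.
have [y [x hx hxle]] := frontier inv hN hS (lt_trans hlt (ltey _)).
exact: nolt hx (le_lt_trans hxle hlt).
Qed.

Lemma lexle_addw x r a : 0 <= a -> lexle x r (x + a) r.
Proof.
rewrite /lexle le_eqVlt => /orP[/eqP <-|hp]; first by rewrite addr0 eqxx leqnn orbT.
by rewrite ltrDl hp.
Qed.

Lemma S_after st x s0 v0 v :
  S (after e w k st x s0 v0) v = if v == v0 then s0 |: S st v else S st v.
Proof. by rewrite /after; case: ifP. Qed.

Lemma kNN_after st x s0 v0 v :
  kNN (after e w k st x s0 v0) v =
  if (size (kNN st v0) < k)%N && (v == v0) then rcons (kNN st v) (x, s0) else kNN st v.
Proof. by rewrite /after; case: ifP => h //=; case: ifP. Qed.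

Lemma Q_after st dist seed v0 s v :
  Q (after e w k st dist seed v0) s v =
  if (s == seed) && (v == v0) then None
  else if [&& (size (kNN st v0) < k)%N, s == seed, e v0 v, (size (kNN st v) < k)%N
           & seed \notin S st v]
  then decr_or_ins (Q st s v) (dist + w v0 v) else Q st s v.
Proof.
rewrite /after; case: ifP => hk /=; last by [].
case: (boolP (v == v0)) => [/eqP ->|hv] /=.
  by rewrite (eirr v0) /= !andbF andbT; case: (s == seed).
by rewrite !andbF.
Qed.

Lemma decr_cases (o : option R) (p x : R) : decr_or_ins o p = Some x -> (o = Some x) \/ x = p.
Proof.
case: o => [q|] /= [<-]; last by right.
by rewrite minEle; case: ifP; [left|right].
Qed.

Lemma decr_le (o : option R) (p : R) : exists2 x : R, decr_or_ins o p = Some x &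
  x <= p /\ forall q, o = Some q -> x <= q.
Proof.
case: o => [q|] /=; last by exists p => //; split => // q.
exists (Num.min q p) => //; rewrite minEle; case: ifP => h; split => // q' [<-] //.
by move/negbT: h; rewrite -ltNge => /ltW.
Qed.

Lemma Inv_step st dist seed v0 : Inv st -> is_pop st dist seed v0 ->
  Inv (after e w k st dist seed v0).
Proof.
move=> inv pop; have [c1 _] := concl inv pop.
have [I1 I0 IP IU IK] := inv; have [hQ0 hmin] := pop.
have [hL0 hS0 hd0] := I1 _ _ _ hQ0.
set st' := after e w k st dist seed v0.
have Smono : forall v, {subset S st v <= S st' v}.
  by move=> v y hy; rewrite S_after; case: ifP => _ //; rewrite !inE hy orbT.
have Snew : seed \in S st' v0 by rewrite S_after eqxx !inE eqxx.
have Qkeep : forall s y x, Q st s y = Some x -> ~~ ((s == seed) && (y == v0)) ->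
    exists2 x', Q st' s y = Some x' & x' <= x.
  move=> s y x hx hn; rewrite Q_after (negbTE hn) hx; case: ifP => _; last by exists x.
  have [x' -> [_ h]] := decr_le (Some x) (dist + w v0 y); exists x' => //; exact: h.
have Qcases : forall s y x, Q st' s y = Some x ->
    Q st s y = Some x \/ [/\ s = seed, e v0 y & x = dist + w v0 y].
  move=> s y x; rewrite Q_after; case: ifP => // _.
  case: ifP => [/and5P[_ /eqP -> hev _ _] /decr_cases [->|->]|_ ->]; by [left|right|left].
split.
- move=> s y x; rewrite Q_after; case: ifP => // hn.
  case: ifP => [/and5P[hk /eqP hs hev hky hnS] hx | _ hx].
    subst s.
    have hy : (y == v0) = false by apply/negbTE/eqP => hy; subst y; rewrite eirr in hev.
    rewrite S_after hy; split => //.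
    case: (decr_cases hx) => [hQ|->]; first by have [] := I1 _ _ _ hQ.
    apply: le_trans (dG_tri seed hev) _; rewrite EFinD; exact: leeD2r.
  have [hL hS hd] := I1 _ _ _ hx; split => //; rewrite S_after; case: ifP => // hy.
  rewrite hy andbT in hn.
  by rewrite !inE negb_or hS andbT hn.
- move=> s hs; case: (I0 s hs) => [h|[x hx hx0]]; first by left; exact: Smono.
  case: (boolP ((s == seed) && (s == v0))) => [/andP[/eqP e1 /eqP e2]|hn].
    by left; subst.
  right; have [x' hx' hle] := Qkeep _ _ _ hx hn; exists x' => //; exact: le_trans hle hx0.
- move=> s u' u hSu hNu' eu hNu.
  case: (boolP (s \in S st u')) => hold.
    case: (IP s u' u hold hNu' eu hNu) => [h|[x hx hle]]; first by left; exact: Smono.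
    case: (boolP ((s == seed) && (u == v0))) => [/andP[/eqP e1 /eqP e2]|hn].
      by left; subst.
    right; have [x' hx' hle'] := Qkeep _ _ _ hx hn; exists x' => //.
    by apply: le_trans hle; rewrite lee_fin.
  move: hSu; rewrite S_after; case: ifP => hu'; last by rewrite (negbTE hold).
  rewrite !inE (negbTE hold) orbF => /eqP hs; move/eqP: hu' => hu'; subst s u'.
  have hk := notfull inv hNu' hS0.
  have hdist := c1 hNu'.
  have huv : (u == v0) = false by apply/negbTE/eqP => h; subst u; rewrite eirr in eu.
  case: (boolP (seed \in S st u)) => hSu'; first by left; exact: Smono.
  have hku := notfull inv hNu hSu'.
  right; rewrite Q_after huv andbF hk eqxx eu hku hSu' /=.
  have [x' -> [hle _]] := decr_le (Q st seed u) (dist + w v0 u); exists x' => //.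
  by rewrite -hdist -EFinD lee_fin.
- move=> v; rewrite kNN_after; case: ifP => [/andP[_ /eqP->]|_]; last exact: IU.
  rewrite map_rcons rcons_uniq IU andbT /=.
  apply/mapP => [[[x' s'] hin /= hs']]; subst s'.
  have [_ hS' _ _] := IK _ _ _ hin; by rewrite hS' in hS0.
- have lex_new : forall s y x, Q st' s y = Some x -> lexle dist (rk seed) x (rk s).
    move=> s y x /Qcases [hx|[-> hev ->]]; last exact: lexle_addw (w0 hev).
    rewrite /lexle; case: (hmin _ _ _ hx) => [->//|[-> ->]]; by rewrite eqxx orbT.
  have old : forall v x' s', (x', s') \in kNN st v ->
      [/\ s' \in L, s' \in S st' v, (d s' v <= x'%:E)%E &
        forall s y x, Q st' s y = Some x -> lexle x' (rk s') x (rk s)].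
    move=> v x' s' hin; have [hL hS hd hlex] := IK _ _ _ hin; split => //; first exact: Smono.
    move=> s y x /Qcases [hx|[-> hev ->]]; first exact: hlex hx.
    exact: lexle_trans (hlex _ _ _ hQ0) (lexle_addw _ _ (w0 hev)).
  move=> v x' s'; rewrite kNN_after; case: ifP => [/andP[hk /eqP hv]|_] hin; last exact: old.
  move: hin; rewrite mem_rcons in_cons => /orP[/eqP [-> ->]|hin]; last exact: old.
  subst v; split => //; exact: lex_new.
Qed.

End Graph.

Unset Implicit Arguments. Set Strict Implicit.

Theorem lemmaB4 (R : realType) (V : finType) (e : rel V) (w : V -> V -> R)
    (L : {set V}) (k : nat) :
  symmetric e -> irreflexive e ->
  (forall u v, e u v -> w u v = w v u) ->
  (forall u v, e u v -> 0 <= w u v) ->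
  (0 < k)%N ->
  forall st : state R V, reach e w L k st ->
  forall (dist : R) (seed v0 : V), is_pop st dist seed v0 ->
    (seed \in NLV e w L k v0 -> (dist%:E = dG e w seed v0)) /\
    (forall s v, s \in L -> (dG e w s v < dist%:E)%E ->
       s \in NLV e w L k v -> s \in S st v).
Proof.
move=> _ eirr _ w0 _ st hr.
have inv : Inv e w L k st.
  elim: hr => [|st' d' s' v' _ IH hp]; first exact: Inv_init.
  exact: Inv_step.
move=> dist seed v0 hp; exact: concl inv hp.
Qed.
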